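(* Consider an $\mathbb{H}_{2n+1}$-structure on $\mathbb{P}V$ such that $T$ fixes every point of the boundary hyperplane $\mathbb{P}V'$, with associated algebra $\mathcal{A}$, Lie algebra $\mathfrak{h}_{2n+1}=\mathfrak{w}\oplus\mathbb{C}t$, maps $\theta$ and $ev$ as in the context. Then $\theta(t)=0$, $\theta$ is injective on $\mathfrak{w}$, $\theta(\mathfrak{w})$ generates $\mathfrak{m}_{\mathcal{B}}=\theta(\mathfrak{m})$ as an associative algebra, and $\theta(\ker(ev))=0$.
   Context: Work over $\mathbb{C}$, $n\ge1$. The Heisenberg group $\mathbb{H}_{2n+1}$ is $\mathbb{W}\times\mathbb{C}$ ($\mathbb{W}$ a $2n$-dimensional space with non-degenerate skew form $\omega$) with law $(w_1,t_1)(w_2,t_2)=(w_1+w_2,t_1+t_2+\tfrac12\omega(w_1,w_2))$; $T=(0,1)$, $\mathbb{I}=\mathbb{C}T$ its center. $V\cong\mathbb{C}^{2n+2}$. An $\mathbb{H}_{2n+1}$-structure on $\mathbb{P}V$ is an effective algebraic action with dense open orbit, with boundary a hyperplane $\mathbb{P}V'$. Regard $\mathbb{H}_{2n+1}\subset\mathbb{P}\mathrm{GL}_{2n+2}(\mathbb{C})$; choosing a basis, it lies in the image of the group of unipotent upper-triangular matrices, and its Lie algebra is realized as a Lie subalgebra $\mathfrak{h}_{2n+1}$ of strictly upper-triangular matrices (commutator bracket), written $\mathfrak{h}_{2n+1}=\mathfrak{w}\oplus\mathbb{C}t$ with $\mathbb{C}t$ the center (the tangent line of $\mathbb{I}$)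 and $[\mathfrak{w},\mathfrak{w}]=\mathbb{C}t$. With $\pi:\mathrm{GL}_{2n+2}\to\mathbb{P}\mathrm{GL}_{2n+2}$ the projection, $\mathcal{A}$ is the unital associative subalgebra of $\mathrm{Mat}_{2n+2}(\mathbb{C})$ generated by $\pi^{-1}(\mathbb{H}_{2n+1})$; $\mathcal{A}=\mathbb{C}I\oplus\mathfrak{m}$ where $\mathfrak{m}$ is the associative subalgebra generated by $\mathfrak{h}_{2n+1}$. Fix $o$ in the open orbit with representative $\hat o\in V$, and let $ev:\mathcal{A}\to V$, $a\mapsto a\hat o$. Let $v=\overline{\mathbb{I}\cdot o}\setminus\mathbb{I}\cdot o$, $\hat v$ a representative, $\widetilde V=V/\mathbb{C}\hat v$. The point $v$ is fixed by $\mathbb{H}_{2n+1}$, so every element of $\mathcal{A}$ preserves $\mathbb{C}\hat v$; let $\theta:\mathcal{A}\to\mathrm{End}(\widetilde V)$ send $a$ to the induced endomorphism of $\widetilde V$, $\mathcal{B}=\theta(\mathcal{A})$ and $\mathfrak{m}_{\mathcal{B}}=\theta(\mathfrak{m})$. *)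

(* Defs.v *)
From HB Require Import structures.
From mathcomp Require Import all_boot all_order all_algebra.
From mathcomp Require Import reals complex.
From mathcomp Require Import mpoly.
Set Implicit Arguments. Unset Strict Implicit. Unset Printing Implicit Defensive.
Import Order.TTheory GRing.Theory Num.Theory.
Local Open Scope ring_scope.

Section Heis.
Variables (K : fieldType) (n : nat).

Definition Hgrp := ('rV[K]_(n.*2) * K)%type.

Definition omega (Om : 'M[K]_(n.*2)) (a b : 'rV[K]_(n.*2)) : K :=
  (a *m Om *m b^T) 0 0.

Definition hmul (Om : 'M[K]_(n.*2)) (g h : Hgrp) : Hgrp :=
  (g.1 + h.1, g.2 + h.2 + 2^-1 * omega Om g.1 h.1).

Definition hunit : Hgrp := (0, 0).
Definition hT : Hgrp := (0, 1).

(* coordinates (w_0, ..., w_{2n-1}, t) of a group element *)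
Definition coords (g : Hgrp) : 'I_(n.*2.+1) -> K :=
  fun i => if unlift ord_max i is Some j then g.1 0 j else g.2.

(* the differential at the identity of the polynomial map given by P:
   dρ(X) = sum_k X_k (∂_k P)(0), where X = (w,t) is a tangent vector of
   H at the identity (the Lie algebra of H, identified with W + K). *)
Definition drho N (P : 'I_N -> 'I_N -> {mpoly K[n.*2.+1]}) (X : Hgrp)
  : 'M[K]_N :=
  \matrix_(i, j) \sum_(k < n.*2.+1)
     coords X k * (mderiv k (P i j)).@[fun _ => 0].

End Heis.

Section Gen.
Variables (K : fieldType) (N : nat).

Inductive alg_gen (u : bool) (S : 'M[K]_N -> Prop) : 'M[K]_N -> Prop :=
| ag_in a : S a -> alg_gen u S a
| ag_unit : u -> alg_gen u S 1%:M
| ag_zero : alg_gen u S 0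
| ag_add a b : alg_gen u S a -> alg_gen u S b -> alg_gen u S (a + b)
| ag_scale (c : K) a : alg_gen u S a -> alg_gen u S (c *: a)
| ag_mul a b : alg_gen u S a -> alg_gen u S b -> alg_gen u S (a *m b).

(* Zariski closure in P(K^N): [x] lies in the closure of the cone S iff every
   homogeneous polynomial vanishing on S vanishes at x. *)
Definition in_Pclosure (S : 'cV[K]_N -> Prop) (x : 'cV[K]_N) : Prop :=
  forall (d : nat) (p : {mpoly K[N]}), p \is d.-homog ->
    (forall y, S y -> p.@[fun i => y i 0] = 0) -> p.@[fun i => x i 0] = 0.

(* theta a = theta b in End(V / K vh), for a, b preserving K vh:
   (a - b) maps V into K vh *)
Definition qeq (vh : 'cV[K]_N) (a b : 'M[K]_N) : Prop :=
  forall x : 'cV[K]_N, exists c : K, (a - b) *m x = c *: vh.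

End Gen.

(* orbit of [oh] (as a cone in V) under the action g.[x] = [rho g x] *)
Definition Hstr_orbit (K : fieldType) n N (rho : Hgrp K n -> 'M[K]_N)
  (oh x : 'cV[K]_N) : Prop :=
  exists g c, c != 0 /\ x = c *: (rho g *m oh).

Definition center_orbit (K : fieldType) n N (rho : Hgrp K n -> 'M[K]_N)
  (oh x : 'cV[K]_N) : Prop :=
  exists (s : K) c, c != 0 /\ x = c *: (rho (0, s) *m oh).

(* Main.v *)
Require Import Defs.
From HB Require Import structures.
From mathcomp Require Import all_boot all_order all_algebra.
From mathcomp Require Import reals complex.
From mathcomp Require Import mpoly.
From mathcomp Require Import ring zify.
Set Implicit Arguments. Unset Strict Implicit. Unset Printing Implicit Defensive.
Import Order.TTheory GRing.Theory Num.Theory.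
Local Open Scope ring_scope.

Section PolyNat.
Variable K : numFieldType.

Lemma poly_nat0 (p : {poly K}) : (forall k : nat, p.[k%:R] = 0) -> p = 0.
Proof.
move=> H; apply/eqP/negPn/negP => p0.
set rs := [seq i%:R | i <- iota 0 (size p)] : seq K.
have H1 : all (root p) rs by apply/allP => x /mapP [i _ ->]; apply/rootP.
have H2 : uniq rs.
  by rewrite map_inj_uniq ?iota_uniq // => i j /eqP; rewrite eqr_nat => /eqP.
by have := max_poly_roots p0 H1 H2; rewrite size_map size_iota ltnn.
Qed.

Lemma poly_nat_eq (p q : {poly K}) : (forall k : nat, p.[k%:R] = q.[k%:R]) -> p = q.
Proof.
move=> H; apply/eqP; rewrite -subr_eq0; apply/eqP/poly_nat0 => k.
by rewrite hornerD hornerN H subrr.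
Qed.

Lemma sum_vanish (J : nat) (e : nat -> K) :
  (forall k : nat, \sum_(j < J) e j * (k%:R) ^+ j = 0) ->
  forall j, (j < J)%N -> e j = 0.
Proof.
move=> H j hj.
have P0 : \poly_(i < J) e i = 0 by apply: poly_nat0 => k; rewrite horner_poly H.
by have := congr1 (fun q : {poly K} => q`_j) P0; rewrite coef_poly hj coef0.
Qed.

Lemma sum_vanish_mx a b (J : nat) (e : nat -> 'M[K]_(a, b)) :
  (forall k : nat, \sum_(j < J) (k%:R) ^+ j *: e j = 0) ->
  forall j, (j < J)%N -> e j = 0.
Proof.
move=> H j hj; apply/matrixP => r c; rewrite mxE.
apply: (@sum_vanish J (fun j => e j r c)) => // k.
have E := congr1 (fun A : 'M[K]_(a, b) => A r c) (H k); rewrite /= summxE mxE in E.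
rewrite -[RHS]E; apply: eq_bigr => i _; by rewrite mxE mulrC.
Qed.

Lemma sum_trunc (V : zmodType) (m1 m2 : nat) (F : nat -> V) :
  (forall j, (m1 <= j)%N -> F j = 0) -> (m1 <= m2)%N ->
  \sum_(j < m2) F j = \sum_(j < m1) F j.
Proof.
move=> HF le12; rewrite [RHS](big_ord_widen m2 F le12) [RHS]big_mkcond /=.
by apply: eq_bigr => j _; case: ifP => // /negbT; rewrite -leqNgt => /HF ->.
Qed.

End PolyNat.

Section ExpLemma.
Variables (K : numFieldType) (N : nat) (p : 'I_N.+1 -> 'I_N.+1 -> {poly K}).
Let f (s : K) : 'M[K]_N.+1 := \matrix_(i, l) (p i l).[s].
Definition Cf (a : nat) : 'M[K]_N.+1 := \matrix_(i, l) (p i l)`_a.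
Hypothesis Hhom : forall s s', f s *m f s' = f (s + s').
Hypothesis Hf0 : f 0 = 1%:M.

Lemma step1 s i l : \sum_r (p i r).[s] * (p r l)`_1 = (p i l)^`().[s].
Proof.
set q1 := \sum_r (p i r).[s] *: p r l.
have E : q1 = p i l \Po ('X + s%:P).
  apply: poly_nat_eq => k; rewrite horner_comp !hornerE.
  have E := congr1 (fun A : 'M[K]_N.+1 => A i l) (Hhom s k%:R); rewrite /= !mxE in E.
  rewrite addrC -E horner_sum; apply: eq_bigr => r _; rewrite hornerZ !mxE.
  by [].
have := congr1 (fun q : {poly K} => q`_1) E; rewrite coef_sum.
rewrite (eq_bigr (fun r => (p i r).[s] * (p r l)`_1)); last by move=> r _; rewrite coefZ.
move=> ->.
have -> : forall q : {poly K}, q`_1 = q^`().[0].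
  by move=> q; rewrite horner_coef0 coef_deriv mulr1n.
rewrite deriv_comp derivD derivX derivC addr0 mulr1 horner_comp.
by rewrite !hornerE.
Qed.

Lemma step2 a : Cf a *m Cf 1 = a.+1%:R *: Cf a.+1.
Proof.
apply/matrixP => i l; rewrite !mxE.
set q3 := \sum_r (p r l)`_1 *: p i r.
have E : q3 = (p i l)^`().
  apply: poly_nat_eq => k; rewrite -step1 horner_sum.
  by apply: eq_bigr => r _; rewrite hornerZ mulrC.
have := congr1 (fun q : {poly K} => q`_a) E; rewrite coef_sum coef_deriv.
rewrite mulr_natl => <-.
by apply: eq_bigr => r _; rewrite coefZ !mxE mulrC.
Qed.

Lemma Cf0 : Cf 0 = 1%:M.
Proof.
rewrite -Hf0; apply/matrixP => i l; rewrite !mxE.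
by rewrite horner_coef0.
Qed.

Lemma Cf_exp a : Cf a = (a`!%:R)^-1 *: Cf 1 ^+ a.
Proof.
elim: a => [|a IH]; first by rewrite Cf0 fact0 invr1 scale1r expr0.
have h := step2 a.
have nz : (a.+1%:R : K) != 0 by rewrite pnatr_eq0.
have -> : Cf a.+1 = (a.+1%:R)^-1 *: (Cf a *m Cf 1).
  by rewrite h scalerA mulVf // scale1r.
rewrite IH -scalemxAl scalerA factS natrM invfM.
by rewrite exprSr mulmxE.
Qed.

Lemma Cf_nil J : (forall i l, (size (p i l) <= J)%N) -> Cf 1 ^+ J = 0.
Proof.
move=> HJ.
have CJ : Cf J = 0.
  by apply/matrixP => i l; rewrite !mxE nth_default.
have := Cf_exp J; rewrite CJ => /esym/eqP; rewrite scaler_eq0 invr_eq0.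
by rewrite pnatr_eq0 (negbTE (lt0n_neq0 (fact_gt0 J))) orFb => /eqP.
Qed.

Lemma f_sum J s : (forall i l, (size (p i l) <= J)%N) ->
  f s = \sum_(j < J) s ^+ j *: Cf j.
Proof.
move=> HJ; apply/matrixP => i l; rewrite !mxE summxE (horner_coef_wide _ (HJ i l)).
by apply: eq_bigr => j _; rewrite !mxE mulrC.
Qed.

End ExpLemma.

Section Uni.
Variables (K : numFieldType) (M : nat).

Definition uni (Q : {mpoly K[M]}) (c : 'I_M -> K) : {poly K} :=
  \sum_(m <- msupp Q) (Q@_m * \prod_k c k ^+ m k) *: 'X^(mdeg m).

Lemma uni_horner (Q : {mpoly K[M]}) (c : 'I_M -> K) (s : K) : (uni Q c).[s] = Q.@[fun k => s * c k].
Proof.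
rewrite mevalE /uni horner_sum; apply: eq_bigr => m _.
rewrite hornerZ hornerXn -mulrA; congr (_ * _).
under [RHS]eq_bigr do rewrite exprMn.
by rewrite big_split /= prodrXr -mdegE mulrC.
Qed.

Lemma mcoeff_sum_supp (Q : {mpoly K[M]}) (m' : 'X_{1..M}) :
  Q@_m' = \sum_(m <- msupp Q) Q@_m * (m == m')%:R.
Proof.
rewrite {1}(mpolyE Q) raddf_sum /=; apply: eq_bigr => m _.
by rewrite mcoeffZ mcoeffX.
Qed.

Lemma prod_zero_pow (m : 'X_{1..M}) :
  \prod_(i < M) (0 : K) ^+ m i = (m == 0%MM)%:R.
Proof.
case: eqP => [->|/eqP nz].
  by rewrite big1 // => i _; rewrite mnm0E expr0.
have [i hi] : exists i, m i != 0%N.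
  apply/existsP; apply: contraR nz; rewrite negb_exists => /forallP H.
  by apply/eqP/mnmP => i; rewrite mnm0E; have := H i; rewrite negbK => /eqP.
by rewrite (bigD1 i) //= expr0n (negbTE hi) mul0r.
Qed.

Lemma meval_zero (Q : {mpoly K[M]}) : Q.@[fun _ => 0] = Q@_0%MM.
Proof.
rewrite mevalE mcoeff_sum_supp; apply: eq_bigr => m _.
by rewrite prod_zero_pow.
Qed.

Lemma uni_coef1 (Q : {mpoly K[M]}) (c : 'I_M -> K) :
  (uni Q c)`_1 = \sum_k c k * (mderiv k Q).@[fun _ => 0].
Proof.
under [RHS]eq_bigr do rewrite meval_zero mcoeff_deriv mnm0E mulr1n add0m
   mcoeff_sum_supp big_distrr.
rewrite /= exchange_big /uni coef_sum; apply: eq_bigr => m _.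
rewrite coefZ coefXn.
case: (mdeg1P m) => [[i /eqP ->]|nex].
  have HP : \prod_k c k ^+ U_(i)%MM k = c i.
    rewrite (bigD1 i) //= mnm1E eqxx expr1 big1 ?mulr1 // => j nji.
    by rewrite mnm1E eq_sym (negbTE nji) expr0.
  have HS : \sum_(k < M) c k * (Q@_U_(i) * (U_(i)%MM == U_(k)%MM)%:R) = c i * Q@_U_(i).
    rewrite (bigD1 i) //= eq_mnm1 eqxx mulr1 big1 ?addr0 // => j nji.
    by rewrite eq_mnm1 eq_sym (negbTE nji) !mulr0.
  by rewrite HP HS mdeg1 eqxx mulr1 mulrC.
have nd : (1%N == mdeg m) = false.
  by rewrite eq_sym; apply/negbTE; apply/(introN (mdeg1P m)).
rewrite nd mulr0 big1 // => k _.
case: eqP => [E|]; last by rewrite !mulr0.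
by case: nex; exists k; rewrite E.
Qed.

End Uni.

Section Main.
Variables (R : realType) (n : nat).
Local Notation K := (R[i]).
Local Notation N := (n.*2.+2).
Variables (Om : 'M[K]_(n.*2)) (rho : Hgrp K n -> 'M[K]_N)
  (P : 'I_N -> 'I_N -> {mpoly K[n.*2.+1]}) (phi : 'rV[K]_N) (oh vh : 'cV[K]_N).
Hypothesis HOm : Om^T = - Om.
Hypothesis Hunit : rho (hunit K n) = 1%:M.
Hypothesis Hmul : forall g h, rho (hmul Om g h) = rho g *m rho h.
Hypothesis HP : forall g i j, rho g i j = (P i j).@[coords g].
Hypothesis Hphi : phi != 0.
Hypothesis Hoh : oh != 0.
Hypothesis Horb : forall x : 'cV[K]_N, x != 0 ->
  (Hstr_orbit rho oh x <-> phi *m x != 0).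
Hypothesis HT : forall x : 'cV[K]_N, x != 0 -> phi *m x = 0 ->
  exists c : K, rho (hT K n) *m x = c *: x.
Hypothesis Hvh : vh != 0.
Hypothesis Hcl : in_Pclosure (center_orbit rho oh) vh.
Hypothesis Hncl : ~ center_orbit rho oh vh.

Definition sc (s : K) (g : Hgrp K n) : Hgrp K n := (s *: g.1, s * g.2).
Definition ginv (g : Hgrp K n) : Hgrp K n := (- g.1, - g.2).

Lemma omega_entry (a b : 'rV[K]_(n.*2)) : omega Om a b = (a *m Om *m b^T) 0 0.
Proof. by []. Qed.

Lemma omega_self w : omega Om w w = 0.
Proof.
have E : omega Om w w = - omega Om w w.
  have T : forall A : 'M[K]_1, A 0 0 = A^T 0 0 by move=> A; rewrite mxE.
  rewrite /omega {1}T !trmx_mul trmxK HOm mulmxA mulmxN mulNmx.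
  by rewrite !mxE.
have : 2%:R * omega Om w w = 0 by rewrite mulr2n mulrDl mul1r {1}E addNr.
by move/eqP; rewrite mulf_eq0 pnatr_eq0 /= => /eqP.
Qed.

Lemma omegaZl s a b : omega Om (s *: a) b = s * omega Om a b.
Proof. by rewrite /omega -!scalemxAl mxE. Qed.
Lemma omegaZr s a b : omega Om a (s *: b) = s * omega Om a b.
Proof. by rewrite /omega linearZ /= -scalemxAr mxE. Qed.
Lemma omegaNl a b : omega Om (- a) b = - omega Om a b.
Proof. by rewrite -scaleN1r omegaZl mulN1r. Qed.
Lemma omega0l b : omega Om 0 b = 0.
Proof. by rewrite /omega !mul0mx mxE. Qed.
Lemma omega0r a : omega Om a 0 = 0.
Proof. by rewrite /omega trmx0 mulmx0 mxE. Qed.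

Lemma hmul_sc s s' g : hmul Om (sc s g) (sc s' g) = sc (s + s') g.
Proof.
rewrite /hmul /sc /=; congr (_, _); first by rewrite scalerDl.
by rewrite omegaZl omegaZr omega_self !mulr0 addr0 mulrDl.
Qed.

Lemma sc0 g : sc 0 g = hunit K n.
Proof. by rewrite /sc scale0r mul0r. Qed.
Lemma sc1 g : sc 1 g = g.
Proof. by case: g => a b; rewrite /sc scale1r mul1r. Qed.

Lemma hmul_ginv g : hmul Om (ginv g) g = hunit K n.
Proof.
rewrite /hmul /ginv /hunit /=; congr (_, _); first by rewrite addNr.
by rewrite omegaNl omega_self oppr0 mulr0 addr0 addNr.
Qed.

Lemma rho_inv g : rho (ginv g) *m rho g = 1%:M.
Proof. by rewrite -Hmul hmul_ginv Hunit. Qed.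

Lemma hmul_center g s : hmul Om g (0, s) = hmul Om (0, s) g.
Proof.
rewrite /hmul /=; congr (_, _); first by rewrite addr0 add0r.
by rewrite omega0r omega0l !mulr0 !addr0 addrC.
Qed.

Lemma hmul_comm h g : hmul Om h g =
  hmul Om (hmul Om g h) (0, 2^-1 * omega Om h.1 g.1 - 2^-1 * omega Om g.1 h.1).
Proof.
rewrite /hmul /=; congr (_, _); first by rewrite addr0 addrC.
rewrite omega0r mulr0 addr0.
set a := omega Om h.1 g.1; set b := omega Om g.1 h.1.
ring.
Qed.

Lemma coords_sc s g k : coords (sc s g) k = s * coords g k.
Proof. by rewrite /coords; case: unlift => [j|] /=; rewrite ?mxE. Qed.

Lemma coordsE g k : coords g k = coords (g.1, 0) k + g.2 * coords (hT K n) k.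
Proof.
rewrite /coords /hT; case: unlift => [j|] /=; first by rewrite mxE mulr0 addr0.
by rewrite mulr1 add0r.
Qed.

Definition gof (r : 'rV[K]_(n.*2.+1)) : Hgrp K n :=
  (\row_j r 0 (lift ord_max j), r 0 ord_max).

Lemma coords_gof r k : coords (gof r) k = r 0 k.
Proof.
rewrite /coords; case: (unliftP ord_max k) => [j ->|->] /=.
  by rewrite mxE.
by [].
Qed.

Local Notation D := (@drho K n N P).
Definition Dk (k : 'I_(n.*2.+1)) : 'M[K]_N :=
  \matrix_(i, l) (mderiv k (P i l)).@[fun _ => 0].

Lemma drhoE g : D g = \sum_k coords g k *: Dk k.
Proof.
by apply/matrixP => i l; rewrite !mxE summxE; apply: eq_bigr => k _; rewrite !mxE.
Qed.

Lemma drho_lin g : D g = D (g.1, 0) + g.2 *: D (hT K n).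
Proof.
rewrite !drhoE scaler_sumr -big_split /=; apply: eq_bigr => k _.
by rewrite coordsE scalerDl scalerA.
Qed.

Lemma drho0 : D (0, 0) = 0.
Proof.
rewrite drhoE big1 // => k _.
by rewrite /coords; case: unlift => [j|] /=; rewrite ?mxE scale0r.
Qed.

Definition pg g (i l : 'I_N) : {poly K} := uni (P i l) (coords g).

Lemma rho_sc s g : rho (sc s g) = \matrix_(i, l) (pg g i l).[s].
Proof.
apply/matrixP => i l; rewrite mxE HP /pg uni_horner.
by apply: meval_eq => k; rewrite coords_sc.
Qed.

Lemma Cf1 g : Cf (pg g) 1 = D g.
Proof. by apply/matrixP => i l; rewrite !mxE /pg uni_coef1. Qed.

Definition Jg g : nat := \max_(il : 'I_N * 'I_N) size (pg g il.1 il.2).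
Lemma Jg_bound g i l : (size (pg g i l) <= Jg g)%N.
Proof. exact: (@leq_bigmax _ (fun il : 'I_N * 'I_N => size (pg g il.1 il.2)) (i, l)). Qed.

Definition Ex (Dm : 'M[K]_N) (J : nat) (s : K) : 'M[K]_N :=
  \sum_(j < J) s ^+ j *: ((j`!%:R)^-1 *: Dm ^+ j).

Lemma pg_hom g s s' : (\matrix_(i, l) (pg g i l).[s]) *m (\matrix_(i, l) (pg g i l).[s'])
   = \matrix_(i, l) (pg g i l).[s + s'].
Proof. by rewrite -!rho_sc -Hmul hmul_sc. Qed.
Lemma pg_0 g : \matrix_(i, l) (pg g i l).[0] = 1%:M.
Proof. by rewrite -rho_sc sc0 Hunit. Qed.

Lemma D_nil g J : (Jg g <= J)%N -> D g ^+ J = 0.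
Proof.
move=> hJ; rewrite -Cf1; apply: (Cf_nil (pg_hom g) (pg_0 g)) => i l.
exact: leq_trans (Jg_bound g i l) hJ.
Qed.

Lemma rho_exp g J s : (Jg g <= J)%N -> rho (sc s g) = Ex (D g) J s.
Proof.
move=> hJ; rewrite rho_sc (f_sum (p := pg g) s (fun i l => leq_trans (Jg_bound g i l) hJ)).
by apply: eq_bigr => j _; rewrite (Cf_exp (pg_hom g) (pg_0 g)) Cf1.
Qed.

Lemma Ex_mul a b (A : 'M[K]_(a, N)) (B : 'M[K]_(N, b)) Dm J s :
  A *m Ex Dm J s *m B = \sum_(j < J) s ^+ j *: ((j`!%:R)^-1 *: (A *m Dm ^+ j *m B)).
Proof.
rewrite /Ex mulmx_sumr mulmx_suml; apply: eq_bigr => j _.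
by rewrite -!scalemxAr -!scalemxAl.
Qed.


Lemma coef_extract g a b (A1 A2 : 'M[K]_(a, N)) (B1 B2 : 'M[K]_(N, b)) :
  (forall s, A1 *m rho (sc s g) *m B1 = A2 *m rho (sc s g) *m B2) ->
  A1 *m D g *m B1 = A2 *m D g *m B2.
Proof.
move=> H; set J := (Jg g).+2.
have HJ : (Jg g <= J)%N by rewrite /J leqW.
have E : forall k : nat, \sum_(j < J) (k%:R) ^+ j *:
    ((j`!%:R)^-1 *: (A1 *m D g ^+ j *m B1 - A2 *m D g ^+ j *m B2)) = 0.
  move=> k; have E1 := H k%:R; rewrite !(rho_exp k%:R HJ) !Ex_mul in E1.
  under eq_bigr do rewrite !scalerBr.
  by rewrite sumrB E1 subrr.
have := sum_vanish_mx (e := fun j => (j`!%:R)^-1 *: (A1 *m D g ^+ j *m B1 - A2 *m D g ^+ j *m B2)) E (j := 1) isT.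
by rewrite expr1 (_ : (1`!)%:R = 1 :> K) ?invr1 ?scale1r // => /eqP; rewrite subr_eq0 => /eqP.
Qed.

Lemma rho_pow g k : rho g ^+ k = rho (sc k%:R g).
Proof.
elim: k => [|k IH]; first by rewrite expr0 sc0 Hunit.
by rewrite exprS IH -mulmxE -{1}(sc1 g) -Hmul hmul_sc -natr1 addrC.
Qed.

Lemma mx11_0 : ((0 : K)%:M : 'M[K]_1) = 0.
Proof. by apply/matrixP => i j; rewrite !mxE mul0rn. Qed.

Definition php (x : 'cV[K]_N) : K := (phi *m x) 0 0.
Lemma phpE x : phi *m x = (php x)%:M.
Proof. exact: mx11_scalar. Qed.
Lemma php_ne x : (phi *m x != 0) = (php x != 0).
Proof.
rewrite phpE; apply/idP/idP; apply: contraNN => /eqP H.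
  by rewrite H mx11_0.
by have := congr1 (fun A : 'M[K]_1 => A 0 0) H; rewrite !mxE eqxx mulr1n => ->.
Qed.
Lemma phpD x y : php (x + y) = php x + php y.
Proof. by rewrite /php mulmxDr mxE. Qed.
Lemma phpZ c x : php (c *: x) = c * php x.
Proof. by rewrite /php -scalemxAr mxE. Qed.
Lemma phpN x : php (- x) = - php x.
Proof. by rewrite /php mulmxN mxE. Qed.
Lemma php0 : php 0 = 0.
Proof. by rewrite /php mulmx0 mxE. Qed.

Lemma oh_orb : php oh != 0.
Proof.
rewrite -php_ne; apply/(Horb Hoh); exists (hunit K n), 1; split.
  exact: oner_neq0.
by rewrite Hunit mul1mx scale1r.
Qed.

Lemma ker_inv g x : php x = 0 -> php (rho g *m x) = 0.
Proof.
move=> hx; apply/eqP/negPn/negP => hne.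
have nz : rho g *m x != 0 by apply: contraNneq hne => ->; rewrite php0.
have [h [c [c0 E]]] : Hstr_orbit rho oh (rho g *m x) by apply/(Horb nz); rewrite php_ne.
have Ex : x = c *: (rho (hmul Om (ginv g) h) *m oh).
  by rewrite Hmul -mulmxA scalemxAr -E mulmxA rho_inv mul1mx.
have xnz : x != 0 by apply: contraNneq nz => ->; rewrite mulmx0.
have : phi *m x != 0 by apply/(Horb xnz); exists (hmul Om (ginv g) h), c.
by rewrite php_ne hx eqxx.
Qed.

Definition j0 : 'I_N := odflt ord0 [pick j | phi 0 j != 0].
Lemma phi_j0 : phi 0 j0 != 0.
Proof.
rewrite /j0; case: pickP => [j //|H]; exfalso; move/eqP: Hphi; apply.
apply/matrixP => i j; rewrite (ord1 i) mxE; have := H j; by move/negbFE/eqP.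
Qed.

Definition u0 : 'cV[K]_N := (phi 0 j0)^-1 *: delta_mx j0 0.
Lemma php_u0 : php u0 = 1.
Proof. by rewrite /u0 phpZ /php -colE mxE mulVf // phi_j0. Qed.

Lemma decomp x : x = (x - php x *: u0) + php x *: u0.
Proof. by rewrite subrK. Qed.
Lemma php_dec x : php (x - php x *: u0) = 0.
Proof. by rewrite phpD phpN phpZ php_u0 mulr1 subrr. Qed.

Lemma mx_eq_col m (A B : 'M[K]_(m, N)) : (forall x : 'cV[K]_N, A *m x = B *m x) -> A = B.
Proof.
move=> H; apply/matrixP => i j; have := H (delta_mx j 0); rewrite -!colE.
by move/(congr1 (fun C : 'M[K]_(m, 1) => C i 0)); rewrite !mxE.
Qed.

Lemma phiD g : phi *m D g = 0.
Proof.
have H1 : forall x, php x = 0 -> phi *m D g *m x = 0.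
  move=> x hx; have := @coef_extract g 1 1 phi 0 x x.
  rewrite !mul0mx; apply => s.
  by rewrite !mul0mx -mulmxA phpE ker_inv // mx11_0.
set lam := php (D g *m u0).
have H2 : phi *m D g = lam *: phi.
  apply: mx_eq_col => x; rewrite [in LHS](decomp x) mulmxDr H1 ?php_dec // add0r.
  rewrite -scalemxAr -scalemxAl -mulmxA phpE phpE /lam !scale_scalar_mx mulrC.
  by [].
have H3 : forall k, phi *m D g ^+ k = lam ^+ k *: phi.
  elim => [|k IH]; first by rewrite !expr0 mulmx1 scale1r.
  have -> : D g ^+ k.+1 = D g ^+ k *m D g by rewrite exprSr mulmxE.
  by rewrite mulmxA IH -scalemxAl H2 scalerA exprSr.
have := H3 (Jg g); rewrite (D_nil (leqnn _)) mulmx0 => /esym/eqP.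
rewrite scaler_eq0 (negbTE Hphi) orbF expf_eq0 => /andP [_ /eqP lam0].
by rewrite H2 lam0 scale0r.
Qed.

Lemma phi_rho g : phi *m rho g = phi.
Proof.
rewrite -[g]sc1 (rho_exp 1 (leqnSn (Jg g))) -[phi *m _]mulmx1 Ex_mul.
rewrite big_ord_recl big1 ?addr0; last first.
  move=> j _; rewrite (_ : (lift ord0 j : nat) = j.+1) //.
  have -> : D g ^+ j.+1 = D g *m D g ^+ j by rewrite exprS mulmxE.
  by rewrite mulmxA phiD !mul0mx !scaler0.
by rewrite !expr0 fact0 invr1 !scale1r !mulmx1.
Qed.

Lemma php_rho g x : php (rho g *m x) = php x.
Proof. by rewrite /php mulmxA phi_rho. Qed.

Local Notation M := (D (hT K n)).

Lemma sc_hT s : sc s (hT K n) = (0, s).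
Proof. by rewrite /sc /hT /= scaler0 mulr1. Qed.

Lemma nil_eig (Dm : 'M[K]_N) (J : nat) (x : 'cV[K]_N) (c : K) :
  Dm ^+ J.+2 = 0 -> Ex Dm J.+2 1 *m x = c *: x -> Dm *m x = 0.
Proof.
move=> HJ E.
pose y k := Dm ^+ k *m x.
have Hy : forall k, (J.+2 <= k)%N -> y k = 0.
  by move=> k hk; rewrite /y -(subnK hk) exprD HJ mulr0 mul0mx.
have Heq : forall k, \sum_(j < J.+2) (j`!%:R)^-1 *: y (j + k)%N = c *: y k.
  move=> k; have := congr1 (mulmx (Dm ^+ k)) E.
  rewrite mulmxA Ex_mul scalemxAr => <-.
  apply: eq_bigr => j _; rewrite expr1n scale1r /y.
  by have -> : Dm ^+ k *m Dm ^+ j = Dm ^+ (j + k) by rewrite mulmxE -exprD addnC.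
have Hk : forall d k, (0 < k)%N -> (J.+2 <= k + d)%N -> y k = 0.
  elim=> [|d IH] k k0 hk; first by apply: Hy; rewrite addn0 in hk.
  have hgt : forall k', (k < k')%N -> y k' = 0.
    move=> k' hk'; apply: IH; first exact: leq_trans k0 (ltnW hk').
    by apply: leq_trans hk _; rewrite addnS -addSn leq_add2r.
  have e1 := Heq k.
  rewrite 2!big_ord_recl big1 /= in e1; last first.
    by move=> j _; rewrite hgt ?scaler0 // /bump /=; lia.
  rewrite /bump /= add0n add1n (hgt k.+1 (ltnSn k)) scaler0 !addr0 fact0 invr1 scale1r in e1.
  have e0 := Heq k.-1.
  rewrite 2!big_ord_recl big1 /= in e0; last first.
    by move=> j _; rewrite hgt ?scaler0 // /bump /=; lia.
  rewrite /bump /= add0n addn0 add1n prednK // fact0 invr1 !scale1r addr0 in e0.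
  case: (eqVneq c 1) => [c1|cn1].
    by move: e0; rewrite c1 scale1r -{2}[y k.-1]addr0 => /addrI.
  have : (1 - c) *: y k = 0 by rewrite scalerBl scale1r -{1}e1 subrr.
  move/eqP; rewrite scaler_eq0 subr_eq0 eq_sym (negbTE cn1) /= => /eqP //.
have := Hk J.+2 1%N isT; rewrite add1n => /(_ (leqnSn _)).
by rewrite /y expr1.
Qed.

Lemma M_ker x : php x = 0 -> M *m x = 0.
Proof.
move=> hx; case: (eqVneq x 0) => [->|nz]; first by rewrite mulmx0.
have h0 : phi *m x = 0 by rewrite phpE hx mx11_0.
have [c Hc] := HT nz h0.
apply: (@nil_eig M (Jg (hT K n)) x c); first by apply: D_nil; rewrite leqW.
by rewrite -(rho_exp 1) ?sc1 // leqW.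
Qed.

Definition m : 'cV[K]_N := M *m u0.

Lemma Mx x : M *m x = php x *: m.
Proof.
rewrite [in LHS](decomp x) mulmxDr M_ker ?php_dec // add0r.
by rewrite -scalemxAr.
Qed.

Lemma M_eq : M = m *m phi.
Proof. by apply: mx_eq_col => x; rewrite Mx -mulmxA phpE mul_mx_scalar. Qed.

Lemma phi_m : phi *m m = 0.
Proof. by rewrite /m mulmxA phiD mul0mx. Qed.

Lemma M2 : M *m M = 0.
Proof. by rewrite {1}M_eq -mulmxA phiD mulmx0. Qed.

Lemma rho0s s : rho (0, s) = 1%:M + s *: M.
Proof.
rewrite -sc_hT (rho_exp s (leqW (leqnSn _))) /Ex 2!big_ord_recl big1 ?addr0.
  rewrite /= !expr0 expr1 fact0 (_ : (1`!)%:R = 1 :> K) // invr1 !scale1r.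
  by rewrite expr1.
move=> j _; rewrite (_ : (lift ord0 (lift ord0 j) : nat) = j.+2) //.
have -> : M ^+ j.+2 = M ^+ j *m (M *m M) by rewrite exprSr exprSr !mulmxE mulrA.
by rewrite M2 mulmx0 !scaler0.
Qed.

Lemma vh_m : exists2 b, b != 0 & vh = b *: m.
Proof.
set B2 := col_mx oh^T m^T.
have sub : (vh^T <= B2)%MS.
  rewrite submxE; apply/eqP/matrixP => i c; rewrite (ord1 i) [RHS]mxE.
  set cok := cokermx B2.
  have hB : B2 *m cok = 0 := mulmx_coker B2.
  have [ho hm] : oh^T *m cok = 0 /\ m^T *m cok = 0.
    by move: hB; rewrite mul_col_mx => /eqP; rewrite col_mx_eq0 => /andP [/eqP -> /eqP ->].
  pose p : {mpoly K[N]} := \sum_j cok j c *: 'X_j.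
  have hp : p \is 1.-homog.
    apply: rpred_sum => j _; apply: rpredZ.
    have hX : ('X_j : {mpoly K[N]}) \is 1.-homog.
      rewrite dhomogX; apply/mdeg1P; by exists j.
    exact: hX.
  have ev : forall y : 'cV[K]_N, p.@[fun i => y i 0] = (y^T *m cok) 0 c.
    move=> y; rewrite /p raddf_sum mxE /=; apply: eq_bigr => j _.
    rewrite mevalZ mevalXU mulrC. by rewrite [y^T 0 j]mxE.
  rewrite -ev; apply: (Hcl hp) => y [s [c' [_ ->]]].
  rewrite ev rho0s mulmxDl mul1mx -scalemxAl Mx scalerA.
  rewrite !linearZ /= linearD /= linearZ /= -scalemxAl mulmxDl -scalemxAl ho hm.
  by rewrite !(scaler0, addr0) mxE.
have [r hr] := submxP sub.
set a := r 0 (lshift 1 0); set b := r 0 (rshift 1 0).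
have E : vh = a *: oh + b *: m.
  apply: trmx_inj; rewrite hr linearD /= !linearZ /=.
  rewrite -[r]hsubmxK mul_row_col [lsubmx r]mx11_scalar [rsubmx r]mx11_scalar.
  by rewrite !mul_scalar_mx !mxE.
have a0 : a = 0.
  case: (eqVneq a 0) => // an; exfalso; apply: Hncl.
  exists (b / (a * php oh)), a; split; first exact: an.
  rewrite rho0s mulmxDl mul1mx -scalemxAl Mx scalerA scalerDr scalerA E.
  congr (_ + _); congr (_ *: _).
  have := oh_orb; move: (php oh) => q q0.
  by field; rewrite q0 an.
exists b.
  by apply: contraNneq Hvh => b0; rewrite E a0 b0 !scale0r addr0.
by rewrite E a0 scale0r add0r.
Qed.

Lemma prop_vh (y : 'cV[K]_N) c : y = c *: m -> exists c', y = c' *: vh.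
Proof.
have [b b0 Eb] := vh_m; move=> ->; exists (c / b).
by rewrite Eb scalerA divfK.
Qed.

Definition Zq (Y : 'M[K]_N) := forall x : 'cV[K]_N, exists c : K, Y *m x = c *: vh.
Definition presv (a : 'M[K]_N) := exists d : K, a *m vh = d *: vh.

Lemma rho_M g : rho g *m M = M *m rho g.
Proof.
have := congr1 rho (hmul_center g 1); rewrite !Hmul rho0s mulmxDr mulmxDl.
by rewrite mulmx1 mul1mx -!scalemxAr -!scalemxAl !scale1r => /addrI.
Qed.

Lemma rho_m g : rho g *m m = php (rho g *m u0) *: m.
Proof. by rewrite {1}/m mulmxA rho_M -mulmxA Mx. Qed.

Lemma D_M g : D g *m M = M *m D g.
Proof.
have := @coef_extract g N N 1%:M M M 1%:M; rewrite !mul1mx !mulmx1; apply => s.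
by rewrite !mul1mx !mulmx1 rho_M.
Qed.

Lemma D_m g : D g *m m = php (D g *m u0) *: m.
Proof. by rewrite {1}/m mulmxA D_M -mulmxA Mx. Qed.

Lemma presv_rho g : presv (rho g).
Proof.
have [b b0 Eb] := vh_m; exists (php (rho g *m u0)).
by rewrite Eb -scalemxAr rho_m !scalerA mulrC.
Qed.

Lemma presv_D g : presv (D g).
Proof.
have [b b0 Eb] := vh_m; exists (php (D g *m u0)).
by rewrite Eb -scalemxAr D_m !scalerA mulrC.
Qed.

Lemma Zq_rhoM g : Zq (rho g *m M).
Proof.
move=> x; rewrite -mulmxA Mx -scalemxAr rho_m scalerA.
exact: prop_vh.
Qed.

Lemma comm_rho h g : Zq (rho h *m rho g - rho g *m rho h).
Proof.
rewrite -!Hmul (hmul_comm h g) Hmul rho0s mulmxDr mulmx1 addrC addKr.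
move=> x; rewrite -scalemxAr -scalemxAl.
have [c ->] := Zq_rhoM (hmul Om g h) x.
by exists ((2^-1 * omega Om h.1 g.1 - 2^-1 * omega Om g.1 h.1) * c); rewrite scalerA.
Qed.

Lemma ZqD Y1 Y2 : Zq Y1 -> Zq Y2 -> Zq (Y1 + Y2).
Proof.
move=> h1 h2 x; have [c1 e1] := h1 x; have [c2 e2] := h2 x.
by exists (c1 + c2); rewrite mulmxDl e1 e2 scalerDl.
Qed.
Lemma ZqZ c Y : Zq Y -> Zq (c *: Y).
Proof. by move=> h x; have [c1 e1] := h x; exists (c * c1); rewrite -scalemxAl e1 scalerA. Qed.
Lemma Zq0 : Zq 0.
Proof. by move=> x; exists 0; rewrite mul0mx scale0r. Qed.
Lemma ZqMl a Y : presv a -> Zq Y -> Zq (a *m Y).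
Proof.
move=> [d hd] h x; have [c e] := h x.
by exists (c * d); rewrite -mulmxA e -scalemxAr hd scalerA mulrC.
Qed.
Lemma ZqMr a Y : Zq Y -> Zq (Y *m a).
Proof. by move=> h x; rewrite -mulmxA; exact: h. Qed.

Definition in_A := alg_gen true (fun b => exists g (c : K), c != 0 /\ b = c *: rho g).

Lemma in_A_props a : in_A a -> presv a /\ forall g, Zq (a *m rho g - rho g *m a).
Proof.
elim => {a}.
- move=> a [h [c [_ ->]]]; split.
    by have [d hd] := presv_rho h; exists (c * d); rewrite -scalemxAl hd scalerA.
  move=> g; rewrite -scalemxAl -scalemxAr -scalerBr; apply: ZqZ; exact: comm_rho.
- move=> _; split; first by exists 1; rewrite mul1mx scale1r.
  by move=> g; rewrite mul1mx mulmx1 subrr; exact: Zq0.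
- split; first by exists 0; rewrite mul0mx scale0r.
  by move=> g; rewrite mul0mx mulmx0 subrr; exact: Zq0.
- move=> a b _ [pa ca] _ [pb cb]; split.
    by case: pa => d1 h1; case: pb => d2 h2; exists (d1 + d2); rewrite mulmxDl h1 h2 scalerDl.
  move=> g; rewrite mulmxDl mulmxDr opprD addrACA; exact: ZqD.
- move=> c a _ [pa ca]; split.
    by case: pa => d h; exists (c * d); rewrite -scalemxAl h scalerA.
  by move=> g; rewrite -scalemxAl -scalemxAr -scalerBr; apply: ZqZ.
- move=> a b _ [pa ca] _ [pb cb]; split.
    case: pa => d1 h1; case: pb => d2 h2; exists (d2 * d1).
    by rewrite -mulmxA h2 -scalemxAr h1 scalerA.
  move=> g.
  have -> : a *m b *m rho g - rho g *m (a *m b) =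
            a *m (b *m rho g - rho g *m b) + (a *m rho g - rho g *m a) *m b.
    by rewrite mulmxBr mulmxBl !mulmxA addrA subrK.
  apply: ZqD; [exact: ZqMl | exact: ZqMr].
Qed.

Lemma faithful a : in_A a -> a *m oh = 0 -> Zq a.
Proof.
move=> Ha h0; have [pa ca] := in_A_props Ha.
have H1 : forall x, php x != 0 -> exists c, a *m x = c *: vh.
  move=> x hx; have xnz : x != 0 by apply: contraNneq hx => ->; rewrite php0.
  have [g [c [_ ->]]] : Hstr_orbit rho oh x by apply/(Horb xnz); rewrite php_ne.
  have [c' hc'] := ca g oh.
  exists (c * c'); rewrite -scalemxAr mulmxA -scalerA -hc'.
  by rewrite mulmxBl -(mulmxA (rho g)) h0 mulmx0 subr0.
move=> x; case: (eqVneq (php x) 0) => hx; last exact: H1.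
have h1 : php (x + oh) != 0 by rewrite phpD hx add0r oh_orb.
have [c hc] := H1 _ h1; exists c; by rewrite -hc mulmxDr h0 addr0.
Qed.

Lemma claim1 : qeq vh M 0.
Proof. by move=> x; rewrite subr0 Mx; exact: prop_vh. Qed.

Lemma claim3a a : alg_gen false (fun X => exists g, X = D g) a ->
  presv a /\ exists b, alg_gen false (fun X => exists w, X = D (w, 0)) b /\ qeq vh a b.
Proof.
elim => {a}.
- move=> a [g ->]; split; first exact: presv_D.
  exists (D (g.1, 0)); split; first by apply: ag_in; exists g.1.
  move=> x; rewrite {1}drho_lin addrC addKr -scalemxAl Mx scalerA.
  exact: prop_vh.
- by [].
- split; first by exists 0; rewrite mul0mx scale0r.
  exists 0; split; first exact: ag_zero.
  by rewrite /qeq subrr; exact: Zq0.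
- move=> a b _ [[d1 h1] [a' [ha' qa]]] _ [[d2 h2] [b' [hb' qb]]]; split.
    by exists (d1 + d2); rewrite mulmxDl h1 h2 scalerDl.
  exists (a' + b'); split; first exact: ag_add.
  by rewrite /qeq opprD addrACA; exact: ZqD.
- move=> c a _ [[d h] [a' [ha' qa]]]; split.
    by exists (c * d); rewrite -scalemxAl h scalerA.
  exists (c *: a'); split; first exact: ag_scale.
  by rewrite /qeq -scalerBr; exact: ZqZ.
- move=> a b _ [pa [a' [ha' qa]]] _ [pb [b' [hb' qb]]]; split.
    case: pa => d1 h1; case: pb => d2 h2; exists (d2 * d1).
    by rewrite -mulmxA h2 -scalemxAr h1 scalerA.
  exists (a' *m b'); split; first exact: ag_mul.
  rewrite /qeq; have -> : a *m b - a' *m b' = a *m (b - b') + (a - a') *m b'.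
    by rewrite mulmxBr mulmxBl addrA subrK.
  apply: ZqD; [exact: ZqMl | exact: ZqMr].
Qed.

Lemma claim3b b : alg_gen false (fun X => exists w, X = D (w, 0)) b ->
  alg_gen false (fun X => exists g, X = D g) b.
Proof.
elim => {b}.
- by move=> X [w ->]; apply: ag_in; exists (w, 0).
- by [].
- exact: ag_zero.
- by move=> a b _ ha _ hb; exact: ag_add.
- by move=> c a _ ha; exact: ag_scale.
- by move=> a b _ ha _ hb; exact: ag_mul.
Qed.

Definition Smx : 'M[K]_(n.*2.+1 + N, N * N) :=
  col_mx (\matrix_(k < n.*2.+1) mxvec (Dk k)) (\matrix_(l < N) mxvec (vh *m delta_mx 0 l)).

Definition Lam (lam : 'cV[K]_(N * N)) (Y : 'M[K]_N) : K := (mxvec Y *m lam) 0 0.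

Lemma LamD lam Y1 Y2 : Lam lam (Y1 + Y2) = Lam lam Y1 + Lam lam Y2.
Proof. by rewrite /Lam linearD mulmxDl mxE. Qed.
Lemma LamZ lam c Y : Lam lam (c *: Y) = c * Lam lam Y.
Proof. by rewrite /Lam linearZ -scalemxAl mxE. Qed.
Lemma LamN lam Y : Lam lam (- Y) = - Lam lam Y.
Proof. by rewrite -scaleN1r LamZ mulN1r. Qed.
Lemma Lam_sum lam (I : Type) (r : seq I) (F : I -> 'M[K]_N) :
  Lam lam (\sum_(i <- r) F i) = \sum_(i <- r) Lam lam (F i).
Proof. by rewrite /Lam linear_sum mulmx_suml summxE. Qed.

Lemma Smx_parts lam : Smx *m lam = 0 ->
  (forall k, Lam lam (Dk k) = 0) /\ (forall l, Lam lam (vh *m delta_mx 0 l) = 0).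
Proof.
rewrite /Smx mul_col_mx => /eqP; rewrite col_mx_eq0 => /andP [/eqP h1 /eqP h2].
split => [k|l].
  by have := congr1 (row k) h1; rewrite row_mul rowK row0 => E; rewrite /Lam E mxE.
by have := congr1 (row l) h2; rewrite row_mul rowK row0 => E; rewrite /Lam E mxE.
Qed.

Lemma Lam_D lam g : Smx *m lam = 0 -> Lam lam (D g) = 0.
Proof.
move=> /Smx_parts [h1 _]; rewrite drhoE Lam_sum big1 // => k _.
by rewrite LamZ h1 mulr0.
Qed.

Lemma Lam_Zq lam Y : Smx *m lam = 0 -> Zq Y -> Lam lam Y = 0.
Proof.
move=> /Smx_parts [_ h2] hY.
have -> : Y = \sum_(l < N) col l Y *m delta_mx 0 l.
  apply/matrixP => i j; rewrite summxE (bigD1 j) //= big1 ?addr0.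
    by rewrite !mxE big_ord1 !mxE !eqxx mulr1.
  by move=> l nlj; rewrite !mxE big_ord1 !mxE [j == l]eq_sym (negbTE nlj) andbF mulr0.
rewrite Lam_sum big1 // => l _.
have [c hc] := hY (delta_mx l 0).
by rewrite colE hc -scalemxAl LamZ h2 mulr0.
Qed.

Lemma in_span (b : 'M[K]_N) :
  (forall lam : 'cV[K]_(N * N), Smx *m lam = 0 -> Lam lam b = 0) ->
  exists g, Zq (b - D g).
Proof.
move=> H.
have sub : (mxvec b <= Smx)%MS.
  rewrite submxE; apply/eqP/matrixP => i c; rewrite (ord1 i) [RHS]mxE.
  have := H (cokermx Smx *m delta_mx c 0).
  rewrite mulmxA mulmx_coker mul0mx => /(_ erefl).
  by rewrite /Lam mulmxA -colE mxE.
have [r hr] := submxP sub.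
rewrite -[r]hsubmxK mul_row_col in hr.
set r1 := lsubmx r in hr; set r2 := rsubmx r in hr.
exists (gof r1).
have E1 : r1 *m (\matrix_(k < n.*2.+1) mxvec (Dk k)) = mxvec (D (gof r1)).
  rewrite mulmx_sum_row drhoE linear_sum /=; apply: eq_bigr => k _.
  by rewrite rowK coords_gof linearZ.
have E2 : r2 *m (\matrix_(l < N) mxvec (vh *m delta_mx 0 l)) = mxvec (vh *m r2).
  rewrite mulmx_sum_row [in RHS](row_sum_delta r2) mulmx_sumr linear_sum /=.
  by apply: eq_bigr => l _; rewrite rowK -scalemxAr linearZ.
have Eb : b = D (gof r1) + vh *m r2.
  by apply: (can_inj mxvecK); rewrite hr E1 E2 linearD.
move=> x; rewrite Eb addrAC subrr add0r -mulmxA.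
by rewrite [r2 *m x]mx11_scalar mul_mx_scalar; eexists.
Qed.

Definition Bp (j : nat) : {poly K} := (j`!%:R)^-1 *: \prod_(i < j) ('X - (i%:R)%:P).

Lemma Bp_nat j k : (Bp j).[k%:R] = ('C(k, j))%:R.
Proof.
rewrite /Bp hornerZ horner_prod.
under eq_bigr do rewrite hornerXsubC.
have Hp : \prod_(i < j) ((k%:R : K) - i%:R) = (k ^_ j)%:R.
  elim: j => [|j IH]; first by rewrite big_ord0 ffactn0.
  rewrite big_ord_recr /= IH ffactnSr natrM.
  case: (leqP j k) => hjk; first by rewrite natrB.
  by rewrite ffact_small // !mul0r.
have f0 : (j`!%:R : K) != 0 by rewrite pnatr_eq0 -lt0n fact_gt0.
by rewrite Hp -bin_ffact natrM mulrC mulfK.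
Qed.

Lemma Bp1 : (Bp 1)`_1 = 1.
Proof.
rewrite /Bp big_ord1 coefZ coefB coefX coefC /= subr0 mulr1.
by rewrite (_ : (1`!)%:R = 1 :> K) // invr1.
Qed.

Lemma Lam0 lam : Lam lam 0 = 0.
Proof. by rewrite /Lam linear0 mul0mx mxE. Qed.

Lemma in_A_rho g : in_A (rho g).
Proof. by apply: ag_in; exists g, 1; rewrite oner_neq0 scale1r. Qed.
Lemma in_A_1 : in_A 1%:M.
Proof. exact: ag_unit. Qed.
Lemma in_A_sub a b : in_A a -> in_A b -> in_A (a - b).
Proof. by move=> ha hb; rewrite -scaleN1r; apply: ag_add ha (ag_scale _ hb). Qed.

Lemma orb_e z e : php z = 0 -> exists g, oh + e *: z = rho g *m oh.
Proof.
move=> hz.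
have ne : php (oh + e *: z) != 0 by rewrite phpD phpZ hz mulr0 addr0 oh_orb.
have nz : oh + e *: z != 0 by apply: contraNneq ne => ->; rewrite php0.
have [g [c [_ Ec]]] : Hstr_orbit rho oh (oh + e *: z) by apply/(Horb nz); rewrite php_ne.
have c1 : c = 1.
  move: (congr1 php Ec); rewrite phpZ php_rho phpD phpZ hz mulr0 addr0.
  by rewrite -{1}(mul1r (php oh)) => /(mulIf oh_orb).
by exists g; rewrite Ec c1 scale1r.
Qed.

Lemma b_nil g1 : exists J1, (1 < J1)%N /\ (rho g1 - 1%:M) ^+ J1 = 0.
Proof.
set J1 := (Jg g1).+2.
have HJ : (Jg g1 <= J1)%N by rewrite /J1 leqW.
set D1 := D g1.
set U := \sum_(j < (Jg g1).+1) ((j.+1)`!%:R)^-1 *: D1 ^+ j.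
have Eb : rho g1 - 1%:M = D1 * U.
  rewrite -{1}[g1]sc1 (rho_exp 1 HJ) /Ex big_ord_recl !expr0 fact0 invr1 !scale1r.
  rewrite addrAC subrr add0r mulr_sumr; apply: eq_bigr => j _.
  rewrite (_ : (lift ord0 j : nat) = j.+1) // expr1n scale1r.
  by rewrite -scalerAr -exprS.
have Hc : GRing.comm D1 U.
  rewrite /GRing.comm mulr_sumr mulr_suml; apply: eq_bigr => j _.
  by rewrite -scalerAr -scalerAl -exprS exprSr.
exists J1; split => //.
by rewrite Eb exprMn_comm // (D_nil HJ) mul0r.
Qed.

Lemma surj z : php z = 0 -> exists g (c : K), z = D g *m oh + c *: vh.
Proof.
move=> hz.
have [g1 Eg1] := orb_e 1 hz.
set b := rho g1 - 1%:M.
have bo : b *m oh = z by rewrite /b mulmxBl mul1mx -Eg1 scale1r addrC addKr.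
have [J1 [hJ1 bnil]] := b_nil g1.
have inAb : in_A b := in_A_sub (in_A_rho g1) in_A_1.
suff [g Hg] : exists g, Zq (b - D g).
  have [c hc] := Hg oh; exists g, c.
  by rewrite -hc mulmxBl addrC subrK bo.
apply: in_span => lam hlam.
have bpow : forall i, (J1 <= i)%N -> b ^+ i = 0.
  by move=> i hi; rewrite -(subnK hi) exprD bnil mulr0.
have key : forall e : nat, \sum_(i < J1) (Lam lam (b ^+ i) * (Bp i)`_1) * (e%:R) ^+ i = 0.
  move=> e.
  have [ge Ege] := orb_e (e%:R) hz.
  set RR := rho ge; set Q := 1%:M + e%:R *: b.
  have ae : Zq (RR - Q).
    apply: faithful.
      rewrite /Q opprD addrA; apply: in_A_sub; last exact: ag_scale.
      apply: in_A_sub; [exact: in_A_rho | exact: in_A_1].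
    by rewrite mulmxBl mulmxDl mul1mx -scalemxAl bo -Ege subrr.
  have pw : forall k, Zq (RR ^+ k - Q ^+ k).
    elim => [|k IH]; first by rewrite !expr0 subrr; exact: Zq0.
    have -> : RR ^+ k.+1 - Q ^+ k.+1 = RR *m (RR ^+ k - Q ^+ k) + (RR - Q) *m Q ^+ k.
      by rewrite !mulmxE mulrBr mulrBl !exprS addrA subrK.
    apply: ZqD; [apply: ZqMl => //; exact: presv_rho | exact: ZqMr].
  set Je := (Jg ge).+2.
  set p1 : {poly K} := \poly_(j < Je) ((j`!%:R)^-1 * Lam lam (D ge ^+ j)).
  set p2 : {poly K} := \sum_(i < J1) ((e%:R) ^+ i * Lam lam (b ^+ i)) *: Bp i.
  have E12 : p1 = p2.
    apply: poly_nat_eq => k.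
    have L1 : Lam lam (RR ^+ k) = p1.[k%:R].
      rewrite /RR rho_pow (rho_exp _ (leqW (leqnSn _))) /Ex Lam_sum horner_poly.
      by apply: eq_bigr => j _; rewrite !LamZ mulrC.
    pose F i := ('C(k, i))%:R * ((e%:R) ^+ i * Lam lam (b ^+ i)).
    have L2 : Lam lam (Q ^+ k) = p2.[k%:R].
      rewrite /Q addrC exprD1n Lam_sum horner_sum.
      transitivity (\sum_(i < k.+1) F i).
        by apply: eq_bigr => i _; rewrite -scaler_nat exprZn !LamZ.
      transitivity (\sum_(i < J1) F i); last first.
        by apply: eq_bigr => i _; rewrite hornerZ Bp_nat mulrC.
      rewrite -(@sum_trunc _ k.+1 (k.+1 + J1) F); last exact: leq_addr.
        rewrite -(@sum_trunc _ J1 (k.+1 + J1) F) //; last exact: leq_addl.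
        by move=> i hi; rewrite /F bpow // Lam0 !mulr0.
      by move=> i hi; rewrite /F bin_small // mul0r.
    have := pw k; move/(Lam_Zq hlam); rewrite LamD LamN L1 L2 => /eqP.
    by rewrite subr_eq0 => /eqP.
  have := congr1 (fun q : {poly K} => q`_1) E12.
  rewrite coef_poly /= expr1 (Lam_D _ hlam) mulr0 /p2 coef_sum => /esym E0.
  rewrite -[RHS]E0; apply: eq_bigr => i _; idtac.
  rewrite [RHS]coefZ; ring.
have := @sum_vanish K J1 (fun i => Lam lam (b ^+ i) * (Bp i)`_1) key 1 hJ1.
by rewrite /= Bp1 mulr1 expr1.
Qed.

Lemma M_Dk : M = Dk ord_max.
Proof.
rewrite drhoE (bigD1 ord_max) //= big1 ?addr0.
  by rewrite /coords unlift_none /= scale1r.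
move=> k nk; case: (unliftP ord_max k) nk => [j ->|->]; last by rewrite eqxx.
by move=> _; rewrite /coords liftK /= mxE scale0r.
Qed.

Lemma claim2 w : qeq vh (D (w, 0)) 0 -> D (w, 0) = 0.
Proof.
move=> H.
case: (eqVneq w 0) => [->|wnz]; first exact: drho0.
exfalso.
have [beta hbeta] := H oh; rewrite subr0 in hbeta.
pose Amx : 'M[K]_(n.*2.+1, N) := \matrix_(k < n.*2.+1)
  (if unlift ord_max k is Some _ then (Dk k *m oh)^T else vh^T).
have Rvh : (vh^T <= Amx)%MS.
  by have := row_sub ord_max Amx; rewrite rowK unlift_none.
have RDk : forall k, ((Dk k *m oh)^T <= Amx)%MS.
  move=> k; case: (unliftP ord_max k) => [j ->|->].
    by have := row_sub (lift ord_max j) Amx; rewrite rowK liftK.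
  rewrite -M_Dk Mx.
  have [c' ->] := @prop_vh (php oh *: m) (php oh) erefl.
  by rewrite linearZ /= scalemx_sub.
have Rz : forall z, php z = 0 -> (z^T <= Amx)%MS.
  move=> z hz; have [g [c ->]] := surj hz.
  rewrite linearD /= linearZ /= drhoE mulmx_suml linear_sum /=.
  apply: addmx_sub; last exact: scalemx_sub.
  apply: summx_sub => k _; rewrite -scalemxAl linearZ /=; exact: scalemx_sub.
have Rker : (kermx phi^T <= Amx)%MS.
  apply/row_subP => i; rewrite -[row i _]trmxK; apply: Rz.
  have h : row i (kermx phi^T) *m phi^T = 0 by rewrite -row_mul mulmx_ker row0.
  have -> : php (row i (kermx phi^T))^T = ((row i (kermx phi^T) *m phi^T)^T) 0 0.
    by rewrite /php trmx_mul trmxK.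
  by rewrite h trmx0 mxE.
have rk1 : \rank (kermx phi^T) = n.*2.+1.
  by rewrite mxrank_ker mxrank_tr rank_rV Hphi subn1.
have rkA : (n.*2.+1 <= \rank Amx)%N by have := mxrankS Rker; rewrite rk1.
pose r1 : 'rV[K]_(n.*2.+1) := \row_k (if unlift ord_max k is Some _ then coords (w, 0) k else - beta).
have hS : \sum_(k < n.*2.+1 | k != ord_max) r1 0 k *: row k Amx = beta *: vh^T.
  have E := congr1 trmx hbeta.
  rewrite drhoE mulmx_suml linear_sum linearZ /= in E.
  rewrite -E [RHS](bigD1 ord_max) //= {1}/coords unlift_none /= scale0r mul0mx trmx0 add0r.
  apply: eq_bigr => k nk.
  case: (unliftP ord_max k) nk => [j ->|->]; last by rewrite eqxx.
  by move=> _; rewrite !mxE rowK liftK -scalemxAl linearZ.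
have r1A : r1 *m Amx = 0.
  rewrite mulmx_sum_row (bigD1 ord_max) //= hS rowK mxE unlift_none.
  by rewrite scaleNr addNr.
have r1nz : r1 != 0.
  have [j hj] : exists j, w 0 j != 0.
    apply/existsP; apply: contraR wnz; rewrite negb_exists => /forallP Hw.
    by apply/eqP/matrixP => i j; rewrite (ord1 i) mxE; have := Hw j; rewrite negbK => /eqP.
  apply: contraNneq hj => /matrixP /(_ 0 (lift ord_max j)).
  by rewrite !mxE liftK /coords liftK /= => ->.
have : (\rank Amx < n.*2.+1)%N.
  have h1 : (r1 <= kermx Amx)%MS by apply/sub_kermxP.
  have := mxrankS h1; rewrite rank_rV r1nz mxrank_ker.
  by rewrite -subn_gt0.
by rewrite ltnNge rkA.
Qed.

End Main.

Theorem lemma3p1 (R : realType) (n : nat)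
  (Om : 'M[R[i]]_(n.*2))
  (rho : Hgrp R[i] n -> 'M[R[i]]_(n.*2.+2))
  (P : 'I_(n.*2.+2) -> 'I_(n.*2.+2) -> {mpoly R[i][n.*2.+1]})
  (phi : 'rV[R[i]]_(n.*2.+2)) (oh vh : 'cV[R[i]]_(n.*2.+2)) :
  (0 < n)%N ->
  (* (W, omega) : omega skew-symmetric and non-degenerate *)
  Om^T = - Om -> Om \in unitmx ->
  (* rho : H_{2n+1} -> GL(V) is an algebraic (polynomial) group homomorphism *)
  rho (hunit R[i] n) = 1%:M ->
  (forall g h, rho (hmul Om g h) = rho g *m rho h) ->
  (forall g i j, rho g i j = (P i j).@[coords g]) ->
  (* the induced action on P(V) is effective *)
  (forall g (c : R[i]), rho g = c%:M -> g = hunit R[i] n) ->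
  (* o = [oh] lies in the open orbit, whose complement is the hyperplane
     P(V'), V' = ker phi *)
  phi != 0 -> oh != 0 ->
  (forall x : 'cV[R[i]]_(n.*2.+2), x != 0 -> (Hstr_orbit rho oh x <-> phi *m x != 0)) ->
  (* T fixes every point of the boundary hyperplane *)
  (forall x : 'cV[R[i]]_(n.*2.+2), x != 0 -> phi *m x = 0 ->
     exists c : R[i], rho (hT R[i] n) *m x = c *: x) ->
  (* v = [vh] lies in closure(I.o) \ I.o *)
  vh != 0 -> in_Pclosure (center_orbit rho oh) vh ->
  ~ center_orbit rho oh vh ->
  let t := @drho _ n _ P (hT R[i] n) in
  let in_h := fun X => exists g, X = @drho _ n _ P g in
  let in_w := fun X => exists w, X = @drho _ n _ P (w, 0) in
  let in_m := alg_gen false in_h in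
  let in_A := alg_gen true (fun b => exists g (c : R[i]), c != 0 /\ b = c *: rho g) in
  [/\ (* theta(t) = 0 *)
      qeq vh t 0,
      (* theta injective on w *)
      (forall X, in_w X -> qeq vh X 0 -> X = 0),
      (* theta(w) generates m_B = theta(m) as an associative algebra *)
      (forall a, in_m a -> exists b, alg_gen false in_w b /\ qeq vh a b) /\
      (forall b, alg_gen false in_w b -> exists a, in_m a /\ qeq vh a b)
    & (* theta(ker ev) = 0 *)
      (forall a, in_A a -> a *m oh = 0 -> qeq vh a 0)].
Proof.
move=> n0 HOm Hinv Hunit Hmul HP Heff Hphi Hoh Horb HT Hvh Hcl Hncl t in_h in_w in_m in_A.
split.
- exact: (claim1 HOm Hunit Hmul HP Hphi Hoh Horb HT Hvh Hcl Hncl).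
- by move=> X [w ->] Hq; apply: (claim2 HOm Hunit Hmul HP Hphi Hoh Horb HT Hvh Hcl Hncl).
- split.
    move=> a Ha; have [_ [b [hb hq]]] := claim3a HOm Hunit Hmul HP Hphi Hoh Horb HT Hvh Hcl Hncl Ha.
    by exists b.
  move=> b hb; exists b; split; first exact: claim3b.
  by move=> x; exists 0; rewrite subrr mul0mx scale0r.
- move=> a Ha h0 x; rewrite subr0.
  exact: (faithful HOm Hunit Hmul HP Hphi Hoh Horb HT Hvh Hcl Hncl Ha h0).
Qed.
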